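(* Let $\mathcal{S}$ be a finite thick generalized quadrangle of order $(s,t)$ with a group $G$ of automorphisms acting regularly on the points. Then for each $g\in G$ with $g^2\ne 1$, \[|\mathcal{L}_2(g)|<(1+st)(2+\sqrt{s+t}),\] where $\mathcal{L}_2(g)$ is the set of lines $\ell$ such that $\ell^g$ and $\ell$ are distinct concurrent lines.
   Context: A generalized quadrangle of order $(s,t)$: each line has $s+1$ points, each point is on $t+1$ lines, and for each non-incident point-line pair $(P,\ell)$ there is a unique point on $\ell$ collinear with $P$; it is thick if $\min\{s,t\}\ge 2$. *)

(* Defs.v *)
From HB Require Import structures.
From mathcomp Require Import all_boot all_order all_algebra all_fingroup.
Set Implicit Arguments. Unset Strict Implicit. Unset Printing Implicit Defensive.

Section GQ.
Variables (P L : finType) (inc : P -> L -> bool).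

Definition collinear (p q : P) : bool := [exists m : L, inc p m && inc q m].
Definition concurrent (l m : L) : bool := [exists p : P, inc p l && inc p m].

Definition is_GQ (s t : nat) : Prop :=
  [/\ (forall p q : P, forall l m : L, p != q -> inc p l -> inc q l ->
          inc p m -> inc q m -> l = m),
      (forall l : L, #|[set p | inc p l]| = s.+1),
      (forall p : P, #|[set l | inc p l]| = t.+1) &
      (forall (p : P) (l : L), ~~ inc p l ->
          #|[set q | inc q l & collinear p q]| = 1)].

Definition thick_GQ (s t : nat) : Prop := is_GQ s t /\ 2 <= s /\ 2 <= t.

Definition acts_by_automorphisms (gT : finGroupType) (G : {group gT})
  (ap : {action gT &-> P}) (al : {action gT &-> L}) : Prop :=
  forall g, g \in G -> forall p l, inc (ap p g) (al l g) = inc p l.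

Definition regular_on_points (gT : finGroupType) (G : {group gT})
  (ap : {action gT &-> P}) : Prop :=
  (forall p q : P, exists2 g, g \in G & ap p g = q) /\
  (forall p : P, forall g, g \in G -> ap p g = p -> g = 1%g).

Definition L2 (gT : finGroupType) (al : {action gT &-> L}) (g : gT) : {set L} :=
  [set l : L | (al l g != l) && concurrent (al l g) l].
End GQ.

(* Main.v *)
Set Warnings "-notation-overridden,-ambiguous-paths".
Require Import Defs.
From HB Require Import structures.
From mathcomp Require Import all_boot all_order all_algebra all_fingroup.
From mathcomp Require Import ring lra.
Import Order.TTheory GRing.Theory Num.Theory.
Set Implicit Arguments. Unset Strict Implicit. Unset Printing Implicit Defensive.
Local Open Scope ring_scope.

Lemma sum_ind (R : pzSemiRingType) (T : finType) (b : pred T) :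
  \sum_(x : T) ((b x)%:R : R) = (#|[set x | b x]|)%:R.
Proof.
rewrite -sum1_card natr_sum [RHS]big_mkcond /=; apply: eq_bigr => x _.
by rewrite inE; case: (b x).
Qed.

Lemma collinear_sym (P L : finType) (inc : P -> L -> bool) p q :
  collinear inc p q = collinear inc q p.
Proof.
by apply/existsP/existsP => -[m /andP[h1 h2]]; exists m; rewrite h1 h2.
Qed.

Lemma e_diag (R : pzSemiRingType) (P L : finType) (inc : P -> L -> bool) s t q :
  is_GQ inc s t ->
  \sum_m ((inc q m)%:R * (inc q m)%:R : R) = (t.+1)%:R.
Proof.
case=> _ _ H3 _; rewrite -(H3 q) -sum_ind; apply: eq_bigr => m _.
by case: (inc q m); rewrite ?mulr1 ?mulr0.
Qed.

Lemma e_off (R : pzSemiRingType) (P L : finType) (inc : P -> L -> bool) s t p q :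
  is_GQ inc s t -> p != q ->
  \sum_m ((inc p m)%:R * (inc q m)%:R : R) = (collinear inc p q)%:R.
Proof.
case=> H1 _ _ _ pq.
rewrite (eq_bigr (fun m => ((inc p m && inc q m)%:R : R))); last first.
  by move=> m _; rewrite -natrM mulnb.
rewrite sum_ind; congr (_%:R).
case: (boolP (collinear inc p q)) => [/existsP[m0 /andP[h1 h2]]|nc].
  transitivity #|[set m0]|; last by rewrite cards1.
  apply: eq_card => m; rewrite !inE.
  apply/idP/eqP => [/andP[a b]|->]; last by rewrite h1 h2.
  exact: (H1 p q m m0 pq a b h1 h2).
apply/eqP; rewrite cards_eq0; apply/eqP/setP => m; rewrite !inE.
apply/negP => hm; move/negP: nc; apply; apply/existsP; exists m; exact: hm.
Qed.

Lemma count_c (R : realFieldType) (P L : finType) (inc : P -> L -> bool) s t q l :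
  is_GQ inc s t ->
  \sum_p ((inc p l)%:R * (\sum_m (inc p m)%:R * (inc q m)%:R) : R)
   = (s + t)%:R * (inc q l)%:R + 1.
Proof.
move=> HG; have HG' := HG; case: HG' => H1 H2 H3 H4.
rewrite (bigD1 q) //= (e_diag R q HG).
rewrite (eq_bigr (fun p => ((inc p l && collinear inc p q)%:R : R))); last first.
  by move=> p pq; rewrite (e_off R HG pq) -natrM mulnb.
have hs : \sum_p ((inc p l)%:R : R) = (s.+1)%:R by rewrite sum_ind H2.
case: (boolP (inc q l)) => ql.
  rewrite (bigD1 q) //= ql in hs.
  rewrite (eq_bigr (fun p => ((inc p l)%:R : R))); last first.
    move=> p _; case: (boolP (inc p l)) => //= pl.
    suff -> : collinear inc p q by [].
    by apply/existsP; exists l; rewrite pl ql.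
  have -> : \sum_(i | i != q) ((inc i l)%:R : R) = s%:R.
    by apply: (addrI 1); rewrite hs -natr1 addrC.
  by rewrite /= !mulr1n mul1r mulr1 -natr1 natrD; ring.
rewrite /= mul0r mulr0 add0r.
rewrite (eq_bigr (fun p => ((inc p l && collinear inc q p)%:R : R))); last first.
  by move=> p _; rewrite collinear_sym.
have E : \sum_p ((inc p l && collinear inc q p)%:R : R) = 1.
  by rewrite sum_ind (H4 q l ql).
rewrite (bigD1 q) //= (negbTE ql) /= add0r in E.
by rewrite add0r.
Qed.

Lemma lemK (R : realFieldType) (P L : finType) (inc : P -> L -> bool) s t
  (z : P -> R) l :
  is_GQ inc s t ->
  \sum_q ((inc q l)%:R * (\sum_m (inc q m)%:R * (\sum_p (inc p m)%:R * z p)))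
   = (s + t)%:R * (\sum_p (inc p l)%:R * z p) + \sum_p z p.
Proof.
move=> HG.
transitivity (\sum_p z p * \sum_q ((inc q l)%:R *
      (\sum_m (inc q m)%:R * (inc p m)%:R) : R)); last first.
  rewrite mulr_sumr -big_split /=; apply: eq_bigr => p _.
  rewrite (count_c R p l HG); ring.
transitivity (\sum_q \sum_m \sum_p
   ((inc q l)%:R * (inc q m)%:R * (inc p m)%:R * z p : R)).
  apply: eq_bigr => q _; rewrite mulr_sumr; apply: eq_bigr => m _.
  rewrite !mulr_sumr; apply: eq_bigr => p _; ring.
transitivity (\sum_p \sum_q \sum_m
   ((inc q l)%:R * (inc q m)%:R * (inc p m)%:R * z p : R)).
  rewrite (eq_bigr (fun q => \sum_p \sum_m
   ((inc q l)%:R * (inc q m)%:R * (inc p m)%:R * z p : R))).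
    by rewrite exchange_big.
  by move=> q _; rewrite exchange_big.
apply: eq_bigr => p _; rewrite mulr_sumr; apply: eq_bigr => q _.
rewrite !mulr_sumr; apply: eq_bigr => m _; ring.
Qed.

Lemma swap_inc (R : realFieldType) (P L : finType) (inc : P -> L -> bool)
  (a : L -> R) (b : P -> R) :
  \sum_m a m * (\sum_q (inc q m)%:R * b q)
  = \sum_q b q * (\sum_m (inc q m)%:R * a m).
Proof.
transitivity (\sum_m \sum_q a m * ((inc q m)%:R * b q)).
  by apply: eq_bigr => m _; rewrite mulr_sumr.
rewrite exchange_big /=; apply: eq_bigr => q _; rewrite mulr_sumr.
by apply: eq_bigr => m _; ring.
Qed.

Lemma energy (R : realFieldType) (P L : finType) (inc : P -> L -> bool) s t
  (z : P -> R) :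
  is_GQ inc s t -> 0 < (s + t)%:R :> R -> \sum_p z p = 0 ->
  \sum_m (\sum_p (inc p m)%:R * z p) ^+ 2 <= (s + t)%:R * \sum_p z p ^+ 2.
Proof.
move=> HG kp z0.
set k : R := (s + t)%:R.
set w := fun m => \sum_p (inc p m)%:R * z p.
set u := fun q => \sum_m (inc q m)%:R * w m.
have HW : \sum_m w m ^+ 2 = \sum_q z q * u q.
  rewrite -(swap_inc inc w z); apply: eq_bigr => m _; by rewrite expr2.
have HU : \sum_q u q ^+ 2 = k * \sum_m w m ^+ 2.
  transitivity (\sum_q u q * (\sum_m (inc q m)%:R * w m)).
    by apply: eq_bigr => q _; rewrite expr2.
  rewrite -(swap_inc inc w u) mulr_sumr; apply: eq_bigr => m _.
  have Hm : \sum_q (inc q m)%:R * u q = k * w m.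
    by rewrite /u /w /k (lemK z m HG) z0 addr0.
  by rewrite Hm expr2 mulrCA.
have H0 : 0 <= \sum_q (u q - k * z q) ^+ 2.
  by apply: sumr_ge0 => q _; exact: sqr_ge0.
have E : \sum_q (u q - k * z q) ^+ 2
   = \sum_q u q ^+ 2 - k *+ 2 * \sum_q z q * u q + k ^+ 2 * \sum_q z q ^+ 2.
  rewrite (eq_bigr (fun q => u q ^+ 2 - k *+ 2 * (z q * u q) + k ^+ 2 * z q ^+ 2)); last by move=> q _; ring.
  by rewrite big_split sumrB /= -!mulr_sumr.
rewrite E HU -HW in H0.
have : 0 <= k * (k * \sum_q z q ^+ 2 - \sum_m w m ^+ 2).
  by move: H0; congr (_ <= _); ring.
by rewrite pmulr_rge0 // subr_ge0.
Qed.

Lemma count1 (R : realFieldType) (T : finType) (b : pred T) :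
  (forall x y, b x -> b y -> x = y) ->
  \sum_x ((b x)%:R : R) = ([exists x, b x])%:R.
Proof.
move=> U; rewrite sum_ind; congr (_%:R).
case: (boolP [exists x, b x]) => [/existsP[x0 bx0]|nb].
  transitivity #|[set x0]|; last by rewrite cards1.
  apply: eq_card => x; rewrite !inE; apply/idP/eqP => [bx|->//].
  exact: U.
apply/eqP; rewrite cards_eq0; apply/eqP/setP => x; rewrite !inE.
apply/negP => bx; move/negP: nb; apply; apply/existsP; exists x; exact: bx.
Qed.

Theorem theorem3p4 (P L : finType) (inc : P -> L -> bool) (s t : nat)
  (gT : finGroupType) (G : {group gT})
  (ap : {action gT &-> P}) (al : {action gT &-> L})
  (R : rcfType) :
  thick_GQ inc s t ->
  acts_by_automorphisms inc G ap al ->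
  regular_on_points G ap ->
  forall g, g \in G -> (g ^+ 2 != 1)%g ->
  ((#|L2 inc al g|)%:R < (1 + s * t)%:R * (2 + Num.sqrt (s + t)%:R) :> R)%R.
Proof.
move=> [HG [s2 t2]] Haut [Htr Hreg] g gG g2.
have HG' := HG; case: HG' => H1 H2 H3 H4.
have gV : ((g^-1)%g \in G) by rewrite groupV.
have g1 : (g != 1)%g by apply: contraNneq g2 => ->; rewrite expg1n.
have apg : forall p, ap p g != p.
  move=> p; apply/eqP => h; move/eqP: g1; apply; exact: Hreg p g gG h.
have apgV : forall p, ap p (g^-1)%g != p.
  move=> p; apply/eqP => h; move/eqP: g1; apply.
  by apply/eqP; rewrite -invg_eq1; apply/eqP; exact: Hreg p _ gV h.
have incg : forall p l, inc (ap p g) (al l g) = inc p l := Haut g gG.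
have incgV : forall p l, inc (ap p (g^-1)%g) (al l (g^-1)%g) = inc p l := Haut _ gV.
have back : forall p l, inc p (al l g) -> inc (ap p (g^-1)%g) l.
  by move=> p l h; rewrite -[l](actK al g) incgV.
set L2g := L2 inc al g.
have L2E : forall l, (l \in L2g) = (al l g != l) && concurrent inc (al l g) l.
  by move=> l; rewrite inE.
pose J := fun p l => [&& l \in L2g, inc p l & inc p (al l g)].
pose S := [set p | [exists l, J p l]].
have J_uniq : forall p l m, J p l -> J p m -> l = m.
  move=> p l m /and3P[_ pl plg] /and3P[_ pm pmg].
  by apply: (H1 (ap p (g^-1)%g) p l m (apgV p)) => //; exact: back.
have J_uniq2 : forall p q l, J p l -> J q l -> p = q.
  move=> p q l /and3P[lL pl plg] /and3P[_ ql qlg]; apply/eqP/negP => /negP pq.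
  move: lL; rewrite L2E => /andP[/eqP ne _]; apply: ne; symmetry.
  exact: (H1 p q l (al l g) pq pl ql plg qlg).
have J_ex : forall l, l \in L2g -> exists p, J p l.
  move=> l lL; have := lL; rewrite L2E => /andP[_ /existsP[p /andP[h1 h2]]].
  by exists p; rewrite /J lL h1 h2.
have cardS : (#|S|%:R : R) = #|L2g|%:R.
  transitivity (\sum_p \sum_l ((J p l)%:R : R)).
    rewrite [LHS](_ : _ = \sum_p ((p \in S)%:R : R)); last first.
      by rewrite sum_ind; congr (_%:R); apply: eq_card => p; rewrite !inE.
    apply: eq_bigr => p _; rewrite count1 ?inE //.
    by move=> l m; exact: J_uniq.
  rewrite exchange_big /=.
  transitivity (\sum_l ((l \in L2g)%:R : R)); last first.
    by rewrite sum_ind; congr (_%:R); apply: eq_card => l; rewrite !inE.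
  apply: eq_bigr => l _; rewrite count1; last by move=> p q; exact: J_uniq2.
  suff -> : [exists p, J p l] = (l \in L2g) by [].
  by apply/existsP/idP => [[p /and3P[]] //|lL]; exact: J_ex.
have two : forall l, l \in L2g ->
    \sum_p ((inc p l)%:R * (p \in S)%:R : R) = 2.
  move=> l lL.
  have [P0 JP] := J_ex l lL.
  have /and3P[_ P0l P0lg] := JP.
  pose R0 := ap P0 (g^-1)%g.
  have R0l : inc R0 l := back _ _ P0lg.
  have R0P0 : R0 != P0 := apgV P0.
  have P0S : P0 \in S by rewrite inE; apply/existsP; exists l.
  have R0S : R0 \in S.
    rewrite inE; apply/existsP; exists (al l (g^-1)%g).
    have e : al (al l (g^-1)%g) g = l by rewrite actKV.
    have R0l' : inc R0 (al l (g^-1)%g) by rewrite incgV.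
    rewrite /J R0l' e R0l !andbT L2E e; apply/andP; split.
      apply/eqP => h; move: lL; rewrite L2E => /andP[/eqP ne _]; apply: ne.
      by rewrite {1}h actKV.
    by apply/existsP; exists R0; rewrite R0l R0l'.
  have Hset : [set p | inc p l & p \in S] = [set P0; R0].
    apply/setP => Q; rewrite !inE; apply/idP/idP; last first.
      by case/orP => /eqP ->; [rewrite P0l; move: P0S | rewrite R0l; move: R0S]; rewrite inE.
    case/andP => Ql QS.
    apply/negPn/negP; rewrite negb_or => /andP[QP0 QR0].
    move: QS => /existsP[m /and3P[_ Qm Qmg]].
    pose Qg := ap Q g.
    have Qgm : inc Qg (al m g) by rewrite incg.
    have Qglg : inc Qg (al l g) by rewrite incg.
    have QgP0 : Qg != P0.
      apply: contra QR0 => /eqP h; apply/eqP; by rewrite /R0 -h /Qg actK.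
    have nQgl : ~~ inc Qg l.
      apply/negP => h; move: lL; rewrite L2E => /andP[/eqP ne _]; apply: ne.
      symmetry; exact: (H1 Qg P0 l (al l g) QgP0 h P0l Qglg P0lg).
    have := H4 Qg l nQgl.
    have sub : [set P0; Q] \subset [set q | inc q l & collinear inc Qg q].
      apply/subsetP => x; rewrite !inE => /orP[]/eqP ->; rewrite ?P0l ?Ql /=;
        apply/existsP.
        by exists (al l g); rewrite Qglg P0lg.
      by exists (al m g); rewrite Qgm Qmg.
    move: (subset_leq_card sub); rewrite cards2 => le h; rewrite h in le.
    by move: le; rewrite eq_sym QP0.
  rewrite (eq_bigr (fun p => ((inc p l && (p \in S))%:R : R))); last first.
    by move=> p _; rewrite -natrM mulnb.
  by rewrite sum_ind Hset cards2 eq_sym R0P0.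
have stp : (0 : R) < (s + t)%:R by rewrite ltr0n addn_gt0 (ltn_trans _ s2).
have sq0 : (0 : R) <= Num.sqrt (s + t)%:R := sqrtr_ge0 _.
have q0 : (0 : R) < (1 + s * t)%:R by rewrite ltr0n addn_gt0.
case: (posnP #|L2g|) => [n0|npos].
  by rewrite n0; apply: mulr_gt0 => //; lra.
have /set0Pn[l0 l0L] : L2g != set0 by rewrite -card_gt0.
have Hv : (#|P|%:R : R) = (s.+1 * (1 + s * t))%:R.
  have := lemK (fun _ : P => (1:R)) l0 HG.
  have c1 : forall m, \sum_p ((inc p m)%:R * (1:R)) = s.+1%:R.
    move=> m; rewrite (eq_bigr (fun p => ((inc p m)%:R : R))) ?sum_ind ?H2 //.
    by move=> p _; rewrite mulr1.
  rewrite (eq_bigr (fun q => (inc q l0)%:R * (\sum_m (inc q m)%:R * s.+1%:R)));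
    last by move=> q _; apply: congr2 => //; apply: eq_bigr => m _; rewrite c1.
  rewrite (eq_bigr (fun q => (inc q l0)%:R * (t.+1%:R * s.+1%:R)));
    last by move=> q _; rewrite -mulr_suml sum_ind H3.
  rewrite -mulr_suml sum_ind H2 -mulr_suml sum_ind H2 mulr1.
  have -> : \sum_(p : P) (1 : R) = #|P|%:R.
    by rewrite -sum1_card natr_sum.
  move=> E; apply: (addrI ((s + t)%:R * s.+1%:R)); rewrite -E.
  rewrite -!natrM -natrD; congr (_%:R).
  ring.
rewrite -/L2g.
set n : R := #|L2g|%:R.
set v : R := #|P|%:R.
set q : R := (1 + s * t)%:R.
set k : R := (s + t)%:R.
have Hvq : v = s.+1%:R * q by rewrite /v Hv natrM.
have n0 : 0 < n by rewrite /n ltr0n.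
have v0 : 0 < v by rewrite Hvq mulr_gt0.
pose c := n / v.
have cv : c * v = n by rewrite /c divfK // gt_eqF.
have c0 : 0 < c by rewrite /c divr_gt0.
pose z := fun p => ((p \in S)%:R : R) - c.
have sumS : \sum_p ((p \in S)%:R : R) = n.
  by rewrite sum_ind /n -cardS; congr (_%:R); apply: eq_card => p; rewrite !inE.
have sumc : forall x : R, \sum_(p : P) x = x * v.
  move=> x; rewrite /v -sum1_card natr_sum mulr_sumr.
  by apply: eq_bigr => p _; rewrite mulr1.
have z0 : \sum_p z p = 0 by rewrite sumrB sumS sumc cv subrr.
have En := @energy R P L inc s t z HG stp z0.
have HZ : \sum_p z p ^+ 2 = n - c * n.
  transitivity (\sum_p (((p \in S)%:R : R) * (1 - 2 * c) + c ^+ 2)).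
    apply: eq_bigr => p _; rewrite /z.
    by case: (p \in S); rewrite /= ?mulr1n ?mulr0n; ring.
  rewrite big_split /= -mulr_suml sumS sumc.
  have -> : c ^+ 2 * v = c * n by rewrite -cv; ring.
  ring.
have wL : forall l, l \in L2g -> \sum_p (inc p l)%:R * z p = 2 - c * s.+1%:R.
  move=> l lL; rewrite /z.
  transitivity (\sum_p ((inc p l)%:R * (p \in S)%:R) - c * \sum_p ((inc p l)%:R : R)).
    by rewrite mulr_sumr -sumrB; apply: eq_bigr => p _; ring.
  by rewrite two // sum_ind H2.
have low : n * (2 - c * s.+1%:R) ^+ 2
    <= \sum_m (\sum_p (inc p m)%:R * z p) ^+ 2.
  rewrite (bigID (fun m => m \in L2g)) /=.
  rewrite (eq_bigr (fun _ => (2 - c * s.+1%:R) ^+ 2)); last first.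
    by move=> m mL; rewrite wL.
  rewrite sumr_const -(mulr_natr _ #|L2g|) -/n mulrC lerDl.
  by apply: sumr_ge0 => m _; exact: sqr_ge0.
have cs : c * s.+1%:R = n / q.
  rewrite /c Hvq; field; apply/andP; split; rewrite gt_eqF //;
    have := ler0n R s; have := ler0n R t; nra.
have key : (2 - n / q) ^+ 2 < k.
  have h1 := le_trans low En.
  rewrite HZ cs in h1.
  have h2 : n * (2 - n / q) ^+ 2 < n * k.
    apply: (le_lt_trans h1).
    have : 0 < k * (c * n) by rewrite mulr_gt0 // mulr_gt0.
    rewrite /k; nra.
  by rewrite ltr_pM2l // in h2.
set x := n / q.
have hn : n = q * x by rewrite /x mulrC divfK // gt_eqF.
rewrite hn ltr_pM2l //.
case: (lerP x 2) => hx.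
  have : 0 < Num.sqrt k by rewrite sqrtr_gt0.
  lra.
have : Num.sqrt ((2 - x) ^+ 2) < Num.sqrt k by rewrite ltr_sqrt.
rewrite sqrtr_sqr ltr0_norm ?subr_lt0 //.
lra.
Qed.
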